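(* Let $t$ be a probabilistic process term of $P_{\mathrm{PA}}$ and let $\sigma_1,\sigma_2$ be closed substitutions such that $\mathbf d(\sigma_1(x),\sigma_2(x))<1$ for every state variable $x$. Then \[ \mathbf d(\sigma_1(t),\sigma_2(t))\le \mathrm{pda}\bigl(\llbracket t\rrbracket_{\mathcal P},\mathbf d(\sigma_1,\sigma_2)\bigr). \]
   Context: Probabilistic transition systems and bisimilarity metric. A signature $\Sigma$ is a countable set of operators $f$, each with an arity $r(f)\in\mathbb N$. Fix disjoint countably infinite sets $\mathcal V_s$ of state variables and $\mathcal V_d$ of distribution variables; $\mathcal V=\mathcal V_s\cup\mathcal V_d$. Open (state) terms are built from state variables and operators; closed terms (processes) $T(\Sigma)$ contain no variables. $\Delta(T(\Sigma))$ is the set of discrete probability distributions on $T(\Sigma)$, $\delta_t$ is the Dirac distribution at $t$, and for distributions $\pi_1,\dots,\pi_{r(f)}$, $f(\pi_1,\dots,\pi_{r(f)})$ is the distribution assigning $f(t_1,\dots,t_{r(f)})$ probability $\prod_i\pi_i(t_i)$. Distribution terms are: distribution variables $\mu$, $\delta(t)$ for state terms $t$, convex combinations $\sum_{i\in I}q_i\theta_i$ ($q_i\in(0,1]$, $\sum q_i=1$), and $f(\theta_1,\dots,\theta_{r(f)})$. A closed substitution $\sigma$ maps state variables to closed terms and distribution variables to distributions; it extends homomorphically to state terms and to distribution terms via $\sigma(\delta(t))=\delta_{\sigma(t)}$, $\sigma(\sum q_i\theta_i)=\sum q_i\sigma(\theta_i)$, $\sigma(f(\theta_1,\dots))=f(\sigma(\theta_1),\dots)$.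 A PTS is $(T(\Sigma),A,\to)$ with $A$ a countable set of actions and $\to\subseteq T(\Sigma)\times A\times\Delta(T(\Sigma))$; write $t\xrightarrow{a}\pi$, and $\mathit{der}(t,a)=\{\pi\mid t\xrightarrow a\pi\}$. A PGSOS rule has the form $\dfrac{\{x_i\xrightarrow{a_{i,m}}\mu_{i,m}\mid i\in I,m\in M_i\}\ \ \{x_i\not\xrightarrow{b_{i,n}}\mid i\in I,n\in N_i\}}{f(x_1,\dots,x_{r(f)})\xrightarrow{a}\theta}$ with $I=\{1,\dots,r(f)\}$, finite $M_i,N_i$, pairwise distinct $x_i\in\mathcal V_s$, pairwise distinct $\mu_{i,m}\in\mathcal V_d$, and $\theta$ a distribution term whose variables are among the $x_i$ and $\mu_{i,m}$. A PTSS $(\Sigma,A,R)$ with $R$ a countable set of PGSOS rules determines a unique supported model: $t\xrightarrow a\pi$ iff for some rule and closed substitution $\sigma$, $\sigma(x_i)\xrightarrow{a_{i,m}}\sigma(\mu_{i,m})$ for all positive premises, $\sigma(x_i)$ has no $b_{i,n}$-transition for all negative premises, $\sigma(f(x_1,\dots))=t$ and $\sigma(\theta)=\pi$. For $d:T(\Sigma)\times T(\Sigma)\to[0,1]$, the Kantorovich lifting is $K(d)(\pi,\pi')=\min_{\omega}\sum_{t,t'}d(t,t')\omega(t,t')$ over couplings $\omega$ of $\pi,\pi'$; the Hausdorff lifting is $H(\hat d)(\Pi_1,\Pi_2)=\max\{\sup_{\pi_1\in\Pi_1}\inf_{\pi_2\in\Pi_2}\hat d(\pi_1,\pi_2),\sup_{\pi_2\in\Pi_2}\inf_{\pi_1\in\Pi_1}\hat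 d(\pi_2,\pi_1)\}$ with $\inf\emptyset=1$, $\sup\emptyset=0$. Let $B(d)(t,t')=\sup_{a\in A}H(K(d))(\mathit{der}(t,a),\mathit{der}(t',a))$. The bisimilarity metric $\mathbf d$ is the least fixed point of $B$ on $[0,1]^{T(\Sigma)\times T(\Sigma)}$ ordered pointwise. The process algebra $P_{\mathrm{PA}}$: operators are the constant $0$, for each $a\in A$, $n\ge1$, $q_1,\dots,q_n\in(0,1]$ with $\sum q_i=1$ the $n$-ary prefix $a.\bigoplus_{i=1}^n[q_i]\_$ (written $a.\_$ when $n=1$), binary $+$, and binary $\|_B$ for each $B\subseteq A$ ($\|$ denotes $\|_A$). Rules: $a.\bigoplus_{i}[q_i]x_i\xrightarrow a\sum_i q_i\delta(x_i)$; from $x_1\xrightarrow a\mu_1$ infer $x_1+x_2\xrightarrow a\mu_1$; from $x_2\xrightarrow a\mu_2$ infer $x_1+x_2\xrightarrow a\mu_2$; for $a\in B$ from $x_1\xrightarrow a\mu_1$, $x_2\xrightarrow a\mu_2$ infer $x_1\|_Bx_2\xrightarrow a\mu_1\|_B\mu_2$; for $a\notin B$ from $x_1\xrightarrow a\mu_1$ infer $x_1\|_Bx_2\xrightarrow a\mu_1\|_B\delta(x_2)$ and from $x_2\xrightarrow a\mu_2$ infer $x_1\|_Bx_2\xrightarrow a\delta(x_1)\|_B\mu_2$. Probabilistic process terms are the open terms built only from $0$, state variables, prefixes $a.\bigoplus_{i=1}^n[q_i]\_$ and $\|$. Multiplicities: $\mathcal M$ is the set of maps $m:\mathcal V\to\mathbb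 N\cup\{\infty\}$; $0$ is the zero map and $1_x$ maps $x$ to $1$ and other variables to $0$. $\mathcal P$ is the set of discrete probability distributions on $\mathcal M$. For probabilistic terms: $\llbracket0\rrbracket_{\mathcal P}=\delta_0$, $\llbracket x\rrbracket_{\mathcal P}=\delta_{1_x}$, $\llbracket t_1\|t_2\rrbracket_{\mathcal P}(m)=\sum\{\llbracket t_1\rrbracket_{\mathcal P}(m_1)\llbracket t_2\rrbracket_{\mathcal P}(m_2)\mid m_1,m_2\in\mathcal M,\ m(x)=m_1(x)+m_2(x)\ \forall x\}$, $\llbracket a.\bigoplus_{i=1}^n[q_i]t_i\rrbracket_{\mathcal P}=\sum_i q_i\llbracket t_i\rrbracket_{\mathcal P}$. $\mathcal E$ is the set of maps $e:\mathcal V\to[0,1)$. $\mathrm{dda}(m,e)=1-\prod_{x\in\mathcal V}(1-e(x))^{m(x)}$ (with $c^\infty=0$ for $0\le c<1$, $1^\infty=1$), and $\mathrm{pda}(p,e)=\sum_{m\in\mathcal M}p(m)\,\mathrm{dda}(m,e)$. For closed substitutions, $\mathbf d(\sigma_1,\sigma_2)\in\mathcal E$ is $x\mapsto\mathbf d(\sigma_1(x),\sigma_2(x))$. *)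

(* Defs.v *)
From Stdlib Require Import Reals Lra List Classical ClassicalEpsilon
  FunctionalExtensionality PropExtensionality.
Import ListNotations.
Open Scope R_scope.

Definition indic (P : Prop) : R :=
  if excluded_middle_informative P then 1 else 0.

Definition sumR (l : list R) : R := fold_right Rplus 0 l.

(** supremum with the convention sup(empty) = 0 (the sets used are all
    bounded subsets of [0,1]) *)
Definition Rsup0 (S : R -> Prop) : R :=
  match excluded_middle_informative (bound S /\ exists x, S x) with
  | left H => proj1_sig (completeness S (proj1 H) (proj2 H))
  | right _ => 0
  end.

(** infimum with the convention inf(empty) = 1 *)
Definition Rinf1 (S : R -> Prop) : R :=
  let E := fun y => S (- y) in
  match excluded_middle_informative (bound E /\ exists y, E y) with
  | left H => - proj1_sig (completeness E (proj1 H) (proj2 H))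
  | right _ => 1
  end.

Inductive term (A : Type) : Type :=
| Nil : term A
| Var : nat -> term A
| Pref : A -> list R -> list (term A) -> term A  (* a.(+)_{i}[q_i] t_i *)
| Plus : term A -> term A -> term A
| Par : (A -> Prop) -> term A -> term A -> term A.

Arguments Nil {A}.
Arguments Var {A} _.
Arguments Pref {A} _ _ _.
Arguments Plus {A} _ _.
Arguments Par {A} _ _ _.

Definition valid_probs (q : list R) : Prop :=
  q <> [] /\ Forall (fun r => 0 < r <= 1) q /\ sumR q = 1.

(** well-formed terms: every prefix operator is an operator of the signature *)
Inductive wf {A : Type} : term A -> Prop :=
| wf_nil : wf Nil
| wf_var x : wf (Var x)
| wf_pref a q ts : valid_probs q -> length q = length ts -> Forall wf ts ->
    wf (Pref a q ts)
| wf_plus t1 t2 : wf t1 -> wf t2 -> wf (Plus t1 t2)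
| wf_par B t1 t2 : wf t1 -> wf t2 -> wf (Par B t1 t2).

Inductive ground {A : Type} : term A -> Prop :=
| gr_nil : ground Nil
| gr_pref a q ts : Forall ground ts -> ground (Pref a q ts)
| gr_plus t1 t2 : ground t1 -> ground t2 -> ground (Plus t1 t2)
| gr_par B t1 t2 : ground t1 -> ground t2 -> ground (Par B t1 t2).

Definition closed_term {A : Type} (t : term A) : Prop := wf t /\ ground t.

Inductive prob_term {A : Type} : term A -> Prop :=
| pt_nil : prob_term Nil
| pt_var x : prob_term (Var x)
| pt_pref a q ts : valid_probs q -> length q = length ts ->
    Forall prob_term ts -> prob_term (Pref a q ts)
| pt_par t1 t2 : prob_term t1 -> prob_term t2 ->
    prob_term (Par (fun _ => True) t1 t2).

Fixpoint subst {A : Type} (s : nat -> term A) (t : term A) : term A :=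
  match t with
  | Nil => Nil
  | Var x => s x
  | Pref a q ts =>
      Pref a q ((fix go (l : list (term A)) : list (term A) :=
                   match l with [] => [] | u :: l' => subst s u :: go l' end) ts)
  | Plus t1 t2 => Plus (subst s t1) (subst s t2)
  | Par B t1 t2 => Par B (subst s t1) (subst s t2)
  end.

Definition dist (A : Type) := term A -> R.

Definition dirac {A : Type} (t : term A) : dist A := fun u => indic (u = t).

Definition pref_dist {A : Type} (q : list R) (ts : list (term A)) : dist A :=
  fun u => sumR (map (fun p => fst p * indic (u = snd p)) (combine q ts)).

Definition par_dist {A : Type} (B : A -> Prop) (p1 p2 : dist A) : dist A :=
  fun u => match u with
           | Par B' u1 u2 => indic (B' = B) * p1 u1 * p2 u2
           | _ => 0
           end.

(** * The PTS induced by the PGSOS rules of P_PA (least = supported model) *)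

Inductive step {A : Type} : term A -> A -> dist A -> Prop :=
| st_pref a q ts : step (Pref a q ts) a (pref_dist q ts)
| st_plusl t1 t2 a p : step t1 a p -> step (Plus t1 t2) a p
| st_plusr t1 t2 a p : step t2 a p -> step (Plus t1 t2) a p
| st_sync (B : A -> Prop) t1 t2 a p1 p2 : B a -> step t1 a p1 -> step t2 a p2 ->
    step (Par B t1 t2) a (par_dist B p1 p2)
| st_left (B : A -> Prop) t1 t2 a p1 : ~ B a -> step t1 a p1 ->
    step (Par B t1 t2) a (par_dist B p1 (dirac t2))
| st_right (B : A -> Prop) t1 t2 a p2 : ~ B a -> step t2 a p2 ->
    step (Par B t1 t2) a (par_dist B (dirac t1) p2).

Definition der {A : Type} (t : term A) (a : A) : dist A -> Prop := fun p => step t a p.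

(** a coupling is given as a finite weighted list of pairs (all distributions
    of the model are finitely supported, hence so are their couplings) *)
Definition coupling (A : Type) := list (term A * term A * R).

Definition marg1 {A : Type} (w : coupling A) (u : term A) : R :=
  sumR (map (fun e => snd e * indic (fst (fst e) = u)) w).
Definition marg2 {A : Type} (w : coupling A) (u : term A) : R :=
  sumR (map (fun e => snd e * indic (snd (fst e) = u)) w).

Definition is_coupling {A : Type} (p p' : dist A) (w : coupling A) : Prop :=
  Forall (fun e => 0 <= snd e) w /\
  (forall u, marg1 w u = p u) /\ (forall u, marg2 w u = p' u).

Definition cost {A : Type} (d : term A -> term A -> R) (w : coupling A) : R :=
  sumR (map (fun e => snd e * d (fst (fst e)) (snd (fst e))) w).

Definition Kant {A : Type} (d : term A -> term A -> R) (p p' : dist A) : R :=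
  Rinf1 (fun c => exists w, is_coupling p p' w /\ c = cost d w).

Definition Haus {A : Type} (dh : dist A -> dist A -> R)
    (P1 P2 : dist A -> Prop) : R :=
  Rmax (Rsup0 (fun r => exists p1, P1 p1 /\
                  r = Rinf1 (fun s => exists p2, P2 p2 /\ s = dh p1 p2)))
       (Rsup0 (fun r => exists p2, P2 p2 /\
                  r = Rinf1 (fun s => exists p1, P1 p1 /\ s = dh p2 p1))).

Definition Bfun {A : Type} (d : term A -> term A -> R) (t t' : term A) : R :=
  Rsup0 (fun r => exists a : A, r = Haus (Kant d) (der t a) (der t' a)).

(** functions in [0,1]^{T(Sigma) x T(Sigma)} (values outside T(Sigma) ignored) *)
Definition unit_valued {A : Type} (d : term A -> term A -> R) : Prop :=
  forall t t', closed_term t -> closed_term t' -> 0 <= d t t' <= 1.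

Definition fixpoint_B {A : Type} (d : term A -> term A -> R) : Prop :=
  forall t t', closed_term t -> closed_term t' -> Bfun d t t' = d t t'.

Definition is_bisim_metric {A : Type} (d : term A -> term A -> R) : Prop :=
  unit_valued d /\ fixpoint_B d /\
  forall d', unit_valued d' -> fixpoint_B d' ->
    forall t t', closed_term t -> closed_term t' -> d t t' <= d' t t'.

(** m : V_s -> N u {oo}, with None standing for oo *)
Definition mult := nat -> option nat.
Definition mzero : mult := fun _ => Some 0%nat.
Definition mone (x : nat) : mult := fun y => if Nat.eqb y x then Some 1%nat else Some 0%nat.
Definition oadd (a b : option nat) : option nat :=
  match a, b with Some n, Some k => Some (n + k)%nat | _, _ => None end.
Definition madd (m1 m2 : mult) : mult := fun x => oadd (m1 x) (m2 x).

(** distributions on multiplicities, as finite formal convex combinations *)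
Definition pdist := list (R * mult).

Fixpoint sem {A : Type} (t : term A) : pdist :=
  match t with
  | Nil => [(1, mzero)]
  | Var x => [(1, mone x)]
  | Pref _ q ts =>
      (fix go (q : list R) (l : list (term A)) {struct l} : pdist :=
         match q, l with
         | qi :: q', u :: l' => map (fun e => (qi * fst e, snd e)) (sem u) ++ go q' l'
         | _, _ => []
         end) q ts
  | Par _ t1 t2 =>
      flat_map (fun e1 => map (fun e2 => (fst e1 * fst e2, madd (snd e1) (snd e2)))
                              (sem t2)) (sem t1)
  | Plus _ _ => []  (* not a probabilistic process term *)
  end.

(** (1 - e x)^(m x), with c^oo = 0 for c < 1 and 1^oo = 1 *)
Definition factor (m : mult) (e : nat -> R) (x : nat) : R :=
  match m x with
  | Some k => (1 - e x) ^ k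
  | None => if excluded_middle_informative (e x = 0) then 1 else 0
  end.

Definition partial_prod (m : mult) (e : nat -> R) (n : nat) : R :=
  fold_right Rmult 1 (map (factor m e) (seq 0 n)).

(** dda(m,e) = 1 - prod_x (1-e(x))^{m(x)}; the infinite product of factors in
    [0,1] is the infimum (= limit) of its partial products *)
Definition dda (m : mult) (e : nat -> R) : R :=
  1 - Rinf1 (fun p => exists n, p = partial_prod m e n).

Definition pda (p : pdist) (e : nat -> R) : R :=
  sumR (map (fun c => fst c * dda (snd c) e) p).

(* Main.v *)
Require Import Defs.
From Stdlib Require Import Reals Lra List Classical ClassicalEpsilon FunctionalExtensionality PropExtensionality Lia.
Require Import Defs.
Import ListNotations.
Open Scope R_scope.

Lemma indic_true (P : Prop) : P -> indic P = 1.
Proof. intros H; unfold indic; destruct (excluded_middle_informative P); tauto. Qed.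
Lemma indic_false (P : Prop) : ~ P -> indic P = 0.
Proof. intros H; unfold indic; destruct (excluded_middle_informative P); tauto. Qed.
Lemma indic_range (P : Prop) : 0 <= indic P <= 1.
Proof. unfold indic; destruct (excluded_middle_informative P); lra. Qed.
Lemma indic_sym {T : Type} (x y : T) : indic (x = y) = indic (y = x).
Proof.
  destruct (classic (x = y)) as [H|H].
  - rewrite !indic_true; auto.
  - rewrite !indic_false; auto.
Qed.

Lemma sumR_app l1 l2 : sumR (l1 ++ l2) = sumR l1 + sumR l2.
Proof. induction l1; simpl; [lra|]. unfold sumR in *; simpl. rewrite IHl1. lra. Qed.

Lemma sumR_cons x l : sumR (x :: l) = x + sumR l.
Proof. reflexivity. Qed.

Lemma sumR_nil : sumR [] = 0.
Proof. reflexivity. Qed.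

Lemma sumR_ext {X} (f g : X -> R) l :
  (forall x, In x l -> f x = g x) -> sumR (map f l) = sumR (map g l).
Proof. intros H; f_equal; apply map_ext_in; auto. Qed.

Lemma sumR_le {X} (f g : X -> R) l :
  (forall x, In x l -> f x <= g x) -> sumR (map f l) <= sumR (map g l).
Proof.
  induction l; cbn [map In]; intros H; [lra|].
  rewrite !sumR_cons. assert (f a <= g a) by auto.
  assert (sumR (map f l) <= sumR (map g l)) by auto. lra.
Qed.

Lemma sumR_nonneg {X} (f : X -> R) l :
  (forall x, In x l -> 0 <= f x) -> 0 <= sumR (map f l).
Proof.
  induction l; cbn [map In]; intros H; [unfold sumR; simpl; lra|].
  rewrite !sumR_cons. assert (0 <= f a) by auto.
  assert (0 <= sumR (map f l)) by auto. lra.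
Qed.

Lemma sumR_zero {X} (f : X -> R) l :
  (forall x, In x l -> f x = 0) -> sumR (map f l) = 0.
Proof.
  induction l; cbn [map In]; intros H; [reflexivity|].
  rewrite !sumR_cons. rewrite H by auto. rewrite IHl by auto. lra.
Qed.

Lemma sumR_scal {X} (c : R) (f : X -> R) l :
  sumR (map (fun x => c * f x) l) = c * sumR (map f l).
Proof. induction l; cbn [map]; [unfold sumR; simpl; lra|]. rewrite !sumR_cons, IHl. ring. Qed.

Lemma sumR_scal_r {X} (c : R) (f : X -> R) l :
  sumR (map (fun x => f x * c) l) = sumR (map f l) * c.
Proof. induction l; cbn [map]; [unfold sumR; simpl; lra|]. rewrite !sumR_cons, IHl. ring. Qed.

Lemma sumR_plus {X} (f g : X -> R) l :
  sumR (map (fun x => f x + g x) l) = sumR (map f l) + sumR (map g l).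
Proof. induction l; cbn [map]; [unfold sumR; simpl; lra|]. rewrite !sumR_cons, IHl. ring. Qed.

Lemma sumR_minus {X} (f g : X -> R) l :
  sumR (map (fun x => f x - g x) l) = sumR (map f l) - sumR (map g l).
Proof. induction l; cbn [map]; [unfold sumR; simpl; lra|]. rewrite !sumR_cons, IHl. ring. Qed.

Lemma sumR_ge_elem {X} (f : X -> R) l x :
  (forall y, In y l -> 0 <= f y) -> In x l -> f x <= sumR (map f l).
Proof.
  induction l; cbn [map In]; intros H Hin; [contradiction|].
  rewrite sumR_cons. destruct Hin as [<-|Hin].
  - assert (0 <= sumR (map f l)) by (apply sumR_nonneg; auto). lra.
  - assert (0 <= f a) by auto. assert (f x <= sumR (map f l)) by auto. lra.
Qed.

Lemma sumR_flat_map {X Y Z} (F : Z -> R) (G : X -> Y -> Z) l1 l2 :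
  sumR (map F (flat_map (fun x => map (G x) l2) l1)) =
  sumR (map (fun x => sumR (map (fun y => F (G x y)) l2)) l1).
Proof.
  induction l1; cbn [map flat_map]; [reflexivity|].
  rewrite map_app, sumR_app, sumR_cons, IHl1, map_map. reflexivity.
Qed.

Lemma sumR_prod {X Y} (f : X -> R) (g : Y -> R) l1 l2 :
  sumR (map (fun x => sumR (map (fun y => f x * g y) l2)) l1) =
  sumR (map f l1) * sumR (map g l2).
Proof.
  rewrite <- sumR_scal_r. apply sumR_ext; intros. apply sumR_scal.
Qed.

Lemma le_epsilon' x y : (forall eps, 0 < eps -> x <= y + eps) -> x <= y.
Proof.
  intros H. destruct (Rle_or_lt x y) as [h|h]; auto.
  specialize (H ((x - y)/2)). lra.
Qed.

Lemma Rinf1_glb (S : R -> Prop) m :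
  (exists x, S x) -> (forall x, S x -> m <= x) ->
  (forall x, S x -> Rinf1 S <= x) /\
  (forall m', (forall x, S x -> m' <= x) -> m' <= Rinf1 S).
Proof.
  intros Hne Hlb. unfold Rinf1.
  destruct (excluded_middle_informative _) as [H|H].
  - destruct (completeness _ _ _) as [l [Hub Hl]]; simpl.
    split.
    + intros x Sx. assert (- x <= l).
      { apply Hub. replace (- - x) with x by ring. auto. }
      lra.
    + intros m' Hm'. assert (l <= - m').
      { apply Hl. intros y Ey. specialize (Hm' _ Ey). lra. }
      lra.
  - exfalso. apply H. split.
    + exists (- m). intros y Ey. specialize (Hlb _ Ey). lra.
    + destruct Hne as [x Sx]. exists (- x). replace (- - x) with x by ring. auto.
Qed.

Lemma Rinf1_empty (S : R -> Prop) : ~ (exists x, S x) -> Rinf1 S = 1.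
Proof.
  intros H. unfold Rinf1. destruct (excluded_middle_informative _) as [H'|H']; auto.
  exfalso. destruct H' as [_ [y Ey]]. apply H. eauto.
Qed.

Lemma Rinf1_le_elem (S : R -> Prop) m x : (forall y, S y -> m <= y) -> S x -> Rinf1 S <= x.
Proof. intros Hlb Sx. apply (Rinf1_glb S m); eauto. Qed.

Lemma Rinf1_ge (S : R -> Prop) m :
  (forall x, S x -> m <= x) -> m <= 1 -> m <= Rinf1 S.
Proof.
  intros Hlb H1. destruct (classic (exists x, S x)) as [Hne|Hne].
  - apply (Rinf1_glb S m); auto.
  - rewrite Rinf1_empty; auto.
Qed.

Lemma Rinf1_le1 (S : R -> Prop) : (forall x, S x -> x <= 1) -> Rinf1 S <= 1.
Proof.
  intros H. unfold Rinf1. destruct (excluded_middle_informative _) as [H'|H']; [|lra].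
  destruct (completeness _ _ _) as [l [Hub Hl]]; simpl.
  destruct H' as [_ [y Ey]]. specialize (Hub _ Ey). specialize (H _ Ey). lra.
Qed.

Lemma Rinf1_range (S : R -> Prop) :
  (forall x, S x -> 0 <= x <= 1) -> 0 <= Rinf1 S <= 1.
Proof.
  intros H. split.
  - apply Rinf1_ge; [intros x Sx; apply H; auto| lra].
  - apply Rinf1_le1. intros; apply H; auto.
Qed.

Lemma Rinf1_approx (S : R -> Prop) m :
  (exists x, S x) -> (forall x, S x -> m <= x) ->
  forall eps, 0 < eps -> exists x, S x /\ x < Rinf1 S + eps.
Proof.
  intros Hne Hlb eps He. destruct (Rinf1_glb S m Hne Hlb) as [_ Hg].
  apply NNPP. intros Hn.
  assert (Rinf1 S + eps <= Rinf1 S); [|lra].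
  apply Hg. intros x Sx. apply Rnot_lt_le. intros Hx. apply Hn. eauto.
Qed.

Lemma Rinf1_le (S1 S2 : R -> Prop) :
  (forall y, S2 y -> exists x, S1 x /\ x <= y) ->
  (forall x, S1 x -> 0 <= x <= 1) -> Rinf1 S1 <= Rinf1 S2.
Proof.
  intros H12 H1. destruct (classic (exists y, S2 y)) as [Hne|Hne].
  - destruct Hne as [y0 Sy0]. destruct (H12 _ Sy0) as [x0 [Sx0 _]].
    assert (Hb: forall y, S2 y -> 0 <= y).
    { intros y Sy. destruct (H12 _ Sy) as [x [Sx Hx]]. specialize (H1 _ Sx). lra. }
    apply (Rinf1_glb S2 0); eauto.
    intros y Sy. destruct (H12 _ Sy) as [x [Sx Hx]].
    assert (Rinf1 S1 <= x) by (apply (Rinf1_le_elem S1 0); auto; intros; apply H1; auto).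
    lra.
  - rewrite (Rinf1_empty S2 Hne). apply Rinf1_le1. intros; apply H1; auto.
Qed.

Lemma Rsup0_lub (S : R -> Prop) M :
  (exists x, S x) -> (forall x, S x -> x <= M) ->
  (forall x, S x -> x <= Rsup0 S) /\
  (forall M', (forall x, S x -> x <= M') -> Rsup0 S <= M').
Proof.
  intros Hne Hub. unfold Rsup0.
  destruct (excluded_middle_informative _) as [H|H].
  - destruct (completeness _ _ _) as [l [Hu Hl]]; simpl. split; auto.
  - exfalso. apply H. split; auto. exists M. intros x Sx; auto.
Qed.

Lemma Rsup0_empty (S : R -> Prop) : ~ (exists x, S x) -> Rsup0 S = 0.
Proof.
  intros H. unfold Rsup0. destruct (excluded_middle_informative _) as [H'|H']; auto.
  exfalso. destruct H' as [_ Hx]. auto.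
Qed.

Lemma Rsup0_ub (S : R -> Prop) M : (forall x, S x -> x <= M) -> 0 <= M -> Rsup0 S <= M.
Proof.
  intros H H0. destruct (classic (exists x, S x)) as [Hne|Hne].
  - apply (Rsup0_lub S M); auto.
  - rewrite Rsup0_empty; auto.
Qed.

Lemma Rsup0_ge_elem (S : R -> Prop) M x : (forall y, S y -> y <= M) -> S x -> x <= Rsup0 S.
Proof. intros Hub Sx. apply (Rsup0_lub S M); eauto. Qed.

Lemma Rsup0_range (S : R -> Prop) :
  (forall x, S x -> 0 <= x <= 1) -> 0 <= Rsup0 S <= 1.
Proof.
  intros H. split.
  - destruct (classic (exists x, S x)) as [[x Sx]|Hne].
    + assert (x <= Rsup0 S) by (apply (Rsup0_ge_elem S 1); auto; intros; apply H; auto).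
      specialize (H _ Sx). lra.
    + rewrite Rsup0_empty; auto; lra.
  - apply Rsup0_ub; [intros; apply H; auto| lra].
Qed.

Lemma Rsup0_le (S1 S2 : R -> Prop) :
  (forall x, S1 x -> exists y, S2 y /\ x <= y) ->
  (forall y, S2 y -> 0 <= y <= 1) -> Rsup0 S1 <= Rsup0 S2.
Proof.
  intros H12 H2. assert (H0 : 0 <= Rsup0 S2) by (apply Rsup0_range; auto).
  apply Rsup0_ub; auto. intros x Sx. destruct (H12 _ Sx) as [y [Sy Hy]].
  assert (y <= Rsup0 S2) by (apply (Rsup0_ge_elem S2 1); auto; intros; apply H2; auto).
  lra.
Qed.

Definition lm {A} (l : list (R * term A)) (u : term A) : R :=
  sumR (map (fun e => fst e * indic (u = snd e)) l).

Definition fdist {A} (p : dist A) : Prop :=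
  exists l : list (R * term A),
    Forall (fun e => 0 <= fst e /\ closed_term (snd e)) l /\
    sumR (map fst l) = 1 /\ forall u, p u = lm l u.

Lemma closed_par {A} B (u1 u2 : term A) :
  closed_term (Par B u1 u2) -> closed_term u1 /\ closed_term u2.
Proof. intros [Hw Hg]. inversion Hw; inversion Hg; subst. split; split; auto. Qed.

Lemma closed_par' {A} B (u1 u2 : term A) :
  closed_term u1 -> closed_term u2 -> closed_term (Par B u1 u2).
Proof. intros [] []; split; constructor; auto. Qed.

Lemma closed_plus {A} (u1 u2 : term A) :
  closed_term (Plus u1 u2) -> closed_term u1 /\ closed_term u2.
Proof. intros [Hw Hg]. inversion Hw; inversion Hg; subst. split; split; auto. Qed.

Lemma closed_pref {A} a q (ts : list (term A)) :
  closed_term (Pref a q ts) ->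
  valid_probs q /\ length q = length ts /\ Forall closed_term ts.
Proof.
  intros [Hw Hg]. inversion Hw; inversion Hg; subst. split; [auto| split; [auto|]].
  clear - H4 H6. induction ts; auto. inversion H4; inversion H6; subst.
  constructor; [split; auto| auto].
Qed.

Lemma indic_par {A} (B B' : A -> Prop) (u1 u2 x1 x2 : term A) :
  indic (Par B' u1 u2 = Par B x1 x2) = indic (B' = B) * indic (u1 = x1) * indic (u2 = x2).
Proof.
  destruct (classic (B' = B)) as [h1|h1];
  destruct (classic (u1 = x1)) as [h2|h2];
  destruct (classic (u2 = x2)) as [h3|h3];
  try (subst; rewrite !indic_true; auto; ring);
  (rewrite (indic_false (Par _ _ _ = _)); [| intros h; injection h; intros; subst; tauto]);
  try (rewrite (indic_false (B' = B)) by auto);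
  try (rewrite (indic_false (u1 = x1)) by auto);
  try (rewrite (indic_false (u2 = x2)) by auto); ring.
Qed.

Lemma sum_par {A X Y} (l1 : list X) (l2 : list Y) (f1 : X -> R) (x1 : X -> term A)
  (f2 : Y -> R) (x2 : Y -> term A) B u :
  sumR (map (fun x => sumR (map (fun y => f1 x * f2 y * indic (u = Par B (x1 x) (x2 y))) l2)) l1)
  = par_dist B (fun v => sumR (map (fun x => f1 x * indic (v = x1 x)) l1))
               (fun v => sumR (map (fun y => f2 y * indic (v = x2 y)) l2)) u.
Proof.
  destruct u as [| n | a q ts | t1 t2 | B' u1 u2]; simpl;
  try (apply sumR_zero; intros; apply sumR_zero; intros;
       rewrite indic_false; [ring| discriminate]).
  transitivity (sumR (map (fun x => sumR (map (fun y =>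
     (indic (B' = B) * (f1 x * indic (u1 = x1 x))) * (f2 y * indic (u2 = x2 y))) l2)) l1)).
  - apply sumR_ext; intros x _. apply sumR_ext; intros y _.
    rewrite indic_par. ring.
  - rewrite sumR_prod, sumR_scal. ring.
Qed.

Definition parl {A} (B : A -> Prop) (l1 l2 : list (R * term A)) : list (R * term A) :=
  flat_map (fun e1 => map (fun e2 => (fst e1 * fst e2, Par B (snd e1) (snd e2))) l2) l1.

Lemma lm_parl {A} B (l1 l2 : list (R * term A)) u :
  lm (parl B l1 l2) u = par_dist B (lm l1) (lm l2) u.
Proof.
  unfold lm, parl. rewrite sumR_flat_map. simpl.
  apply (sum_par l1 l2 fst snd fst snd B u).
Qed.

Lemma map_fst_combine {X Y} (q : list X) (ts : list Y) :
  length q = length ts -> map fst (combine q ts) = q.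
Proof.
  revert ts; induction q; intros [|t ts] H; simpl in *; try discriminate; auto.
  f_equal; auto.
Qed.

Lemma fdist_dirac {A} (t : term A) : closed_term t -> fdist (dirac t).
Proof.
  intros Ht. exists [(1, t)]. repeat split.
  - constructor; [simpl; split; [lra|auto] | constructor].
  - unfold sumR; simpl; lra.
  - intros u. unfold lm, dirac, sumR; simpl. ring.
Qed.

Lemma fdist_par {A} (B : A -> Prop) p1 p2 : fdist p1 -> fdist p2 -> fdist (par_dist B p1 p2).
Proof.
  intros [l1 [H1 [S1 E1]]] [l2 [H2 [S2 E2]]]. exists (parl B l1 l2). repeat split.
  - apply Forall_forall. intros [r v] Hin. unfold parl in Hin.
    apply in_flat_map in Hin. destruct Hin as [e1 [Hin1 Hin]].
    apply in_map_iff in Hin. destruct Hin as [e2 [Heq Hin2]]. injection Heq; intros; subst.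
    rewrite Forall_forall in H1, H2. destruct (H1 _ Hin1), (H2 _ Hin2). simpl.
    split; [apply Rmult_le_pos; auto| apply closed_par'; auto].
  - unfold parl. rewrite sumR_flat_map. simpl. rewrite sumR_prod, S1, S2. ring.
  - intros u. rewrite lm_parl. destruct u; simpl; auto. rewrite E1, E2. auto.
Qed.

Lemma fdist_step {A} (t : term A) a p : step t a p -> closed_term t -> fdist p.
Proof.
  induction 1; intros Hc.
  - apply closed_pref in Hc. destruct Hc as [[Hne [Hq Hs]] [Hl Hts]].
    exists (combine q ts). split; [|split].
    + apply Forall_forall. intros [r v] Hin. simpl.
      rewrite Forall_forall in Hq, Hts. split.
      * assert (0 < r <= 1) by (apply Hq; exact (in_combine_l _ _ _ _ Hin)). lra.
      * apply Hts. exact (in_combine_r _ _ _ _ Hin).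
    + rewrite map_fst_combine; auto.
    + intros u. reflexivity.
  - apply IHstep. apply (closed_plus _ _ Hc).
  - apply IHstep. apply (closed_plus _ _ Hc).
  - apply closed_par in Hc. apply fdist_par; tauto.
  - apply closed_par in Hc. apply fdist_par; [tauto| apply fdist_dirac; tauto].
  - apply closed_par in Hc. apply fdist_par; [apply fdist_dirac; tauto| tauto].
Qed.

Lemma lm_nonzero {A} (l : list (R * term A)) u :
  lm l u <> 0 -> exists e, In e l /\ u = snd e.
Proof.
  intros H. apply NNPP; intros Hn. apply H. unfold lm. apply sumR_zero.
  intros e Hin. rewrite indic_false; [ring|]. intros Heq. apply Hn. eauto.
Qed.

Lemma lm_closed {A} (l : list (R * term A)) u :
  Forall (fun e => 0 <= fst e /\ closed_term (snd e)) l -> lm l u <> 0 -> closed_term u.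
Proof.
  intros HF Hn. destruct (lm_nonzero l u Hn) as [e [Hin ->]].
  rewrite Forall_forall in HF. apply HF; auto.
Qed.

Lemma coupling_closed {A} (p p' : dist A) w :
  fdist p -> fdist p' -> is_coupling p p' w ->
  forall e, In e w -> snd e = 0 \/ (closed_term (fst (fst e)) /\ closed_term (snd (fst e))).
Proof.
  intros [l [Hl [_ El]]] [l' [Hl' [_ El']]] [Hw [H1 H2]] e Hin.
  destruct (Req_dec (snd e) 0) as [h|h]; [left; auto| right].
  rewrite Forall_forall in Hw. assert (He := Hw e Hin).
  assert (Hnn : forall e', In e' w -> 0 <= snd e' * indic (fst (fst e') = fst (fst e))).
  { intros e' Hin'. apply Rmult_le_pos; [apply Hw; auto| apply indic_range]. }
  assert (Hnn' : forall e', In e' w -> 0 <= snd e' * indic (snd (fst e') = snd (fst e))).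
  { intros e' Hin'. apply Rmult_le_pos; [apply Hw; auto| apply indic_range]. }
  split.
  -     assert (Hm := sumR_ge_elem _ w e Hnn Hin). cbv beta in Hm. rewrite indic_true in Hm by auto.
    fold (marg1 w (fst (fst e))) in Hm. rewrite H1 in Hm.
    apply (lm_closed l); auto. rewrite <- El. lra.
  -     assert (Hm := sumR_ge_elem _ w e Hnn' Hin). cbv beta in Hm. rewrite indic_true in Hm by auto.
    fold (marg2 w (snd (fst e))) in Hm. rewrite H2 in Hm.
    apply (lm_closed l'); auto. rewrite <- El'. lra.
Qed.

Definition tb (P : Prop) : bool := if excluded_middle_informative P then true else false.

Lemma tb_indic (P : Prop) : (if tb P then 1 else 0) = indic P.
Proof. unfold tb, indic. destruct (excluded_middle_informative P); auto. Qed.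

Lemma sumR_filter_split {X} (P : X -> bool) (f : X -> R) l :
  sumR (map f l) = sumR (map f (filter P l)) + sumR (map f (filter (fun x => negb (P x)) l)).
Proof.
  induction l; [unfold sumR; simpl; lra|].
  cbn [map filter]. destruct (P a); cbn [negb map]; rewrite !sumR_cons, IHl; ring.
Qed.

Lemma sumR_filter {X} (P : X -> bool) (f : X -> R) l :
  sumR (map f (filter P l)) = sumR (map (fun x => f x * if P x then 1 else 0) l).
Proof.
  induction l; [reflexivity|].
  cbn [map filter]. destruct (P a); cbn [map]; rewrite ?sumR_cons, IHl; ring.
Qed.

Lemma weight_le_aux {A} n (w : coupling A) (l : list (R * term A)) :
  (length w <= n)%nat ->
  Forall (fun e => 0 <= snd e) w -> Forall (fun e => 0 <= fst e) l ->
  (forall u, marg1 w u <= lm l u) -> sumR (map snd w) <= sumR (map fst l).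
Proof.
  revert w l; induction n; intros w l Hlen Hw Hl Hm.
  - destruct w; simpl in Hlen; [|lia]. simpl. apply sumR_nonneg.
    rewrite Forall_forall in Hl; intros; apply Hl; auto.
  - destruct w as [|e w'].
    + simpl. apply sumR_nonneg. rewrite Forall_forall in Hl; intros; apply Hl; auto.
    + set (u0 := fst (fst e)).
      set (Pw := fun e' : term A * term A * R => tb (fst (fst e') = u0)).
      set (Pl := fun e' : R * term A => tb (u0 = snd e')).
      rewrite (sumR_filter_split Pw snd), (sumR_filter_split Pl fst).
      assert (HI : sumR (map snd (filter Pw (e :: w'))) <= sumR (map fst (filter Pl l))).
      { rewrite !sumR_filter. specialize (Hm u0). unfold marg1, lm in Hm.
        unfold Pw, Pl. erewrite sumR_ext; [erewrite (sumR_ext _ _ l)|].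
        - exact Hm.
        - intros; simpl. rewrite tb_indic. reflexivity.
        - intros; simpl. rewrite tb_indic. reflexivity. }
      assert (HO : sumR (map snd (filter (fun x => negb (Pw x)) (e :: w'))) <=
                   sumR (map fst (filter (fun x => negb (Pl x)) l))).
      { apply IHn.
        - cbn [filter]. unfold Pw at 1. unfold tb.
          destruct (excluded_middle_informative (fst (fst e) = u0)) as [_|h];
            [|exfalso; apply h; reflexivity]. simpl negb.
          simpl in Hlen. pose proof (filter_length_le (fun x => negb (Pw x)) w'). lia.
        - rewrite Forall_forall in Hw |- *. intros x Hx. apply filter_In in Hx. apply Hw; tauto.
        - rewrite Forall_forall in Hl |- *. intros x Hx. apply filter_In in Hx. apply Hl; tauto.
        - intros u. unfold marg1, lm. rewrite !sumR_filter.
          destruct (classic (u = u0)) as [->|hne].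
          + rewrite sumR_zero; [apply sumR_nonneg|].
            * intros x Hx. unfold Pl, tb. rewrite Forall_forall in Hl.
              destruct (excluded_middle_informative (u0 = snd x)); simpl.
              -- lra.
              -- pose proof (Hl x Hx). pose proof (indic_range (u0 = snd x)). nra.
            * intros x Hx. unfold Pw, tb.
              destruct (excluded_middle_informative (fst (fst x) = u0)); simpl.
              -- ring.
              -- rewrite indic_false by auto. ring.
          + specialize (Hm u). unfold marg1, lm in Hm.
            erewrite sumR_ext; [erewrite (sumR_ext _ _ l)|].
            * exact Hm.
            * intros x _. unfold Pl, tb. 
              destruct (excluded_middle_informative (u0 = snd x)); simpl.
              -- rewrite indic_false; [ring| congruence].
              -- ring.
            * intros x _. unfold Pw, tb.
              destruct (excluded_middle_informative (fst (fst x) = u0)); simpl.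
              -- rewrite indic_false; [ring| congruence].
              -- ring. }
      lra.
Qed.

Lemma weight_le1 {A} (p p' : dist A) w :
  fdist p -> is_coupling p p' w -> sumR (map snd w) <= 1.
Proof.
  intros [l [Hl [Sl El]]] [Hw [H1 _]]. rewrite <- Sl.
  apply (weight_le_aux (length w)); auto.
  - rewrite Forall_forall in Hl |- *. intros; apply Hl; auto.
  - intros u. rewrite H1, El. lra.
Qed.

Lemma cost_range {A} (dd : term A -> term A -> R) p p' w :
  unit_valued dd -> fdist p -> fdist p' -> is_coupling p p' w ->
  0 <= cost dd w <= 1.
Proof.
  intros Hu Hp Hp' Hc. pose proof (weight_le1 _ _ _ Hp Hc) as HW.
  pose proof (coupling_closed _ _ _ Hp Hp' Hc) as Hcl.
  destruct Hc as [Hw _]. rewrite Forall_forall in Hw.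
  unfold cost. split.
  - apply sumR_nonneg. intros e Hin. destruct (Hcl e Hin) as [h|[h1 h2]].
    + rewrite h; lra.
    + pose proof (Hu _ _ h1 h2). pose proof (Hw e Hin). nra.
  - eapply Rle_trans; [|exact HW]. apply sumR_le. intros e Hin.
    destruct (Hcl e Hin) as [h|[h1 h2]].
    + rewrite h; lra.
    + pose proof (Hu _ _ h1 h2). pose proof (Hw e Hin). nra.
Qed.

Lemma cost_le {A} (dd1 dd2 : term A -> term A -> R) p p' w :
  (forall t t', closed_term t -> closed_term t' -> dd1 t t' <= dd2 t t') ->
  fdist p -> fdist p' -> is_coupling p p' w -> cost dd1 w <= cost dd2 w.
Proof.
  intros Hle Hp Hp' Hc.
  pose proof (coupling_closed _ _ _ Hp Hp' Hc) as Hcl.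
  destruct Hc as [Hw _]. rewrite Forall_forall in Hw.
  apply sumR_le. intros e Hin. destruct (Hcl e Hin) as [h|[h1 h2]].
  + rewrite h; lra.
  + pose proof (Hle _ _ h1 h2). pose proof (Hw e Hin). nra.
Qed.

Lemma coupling_exists {A} (p p' : dist A) :
  fdist p -> fdist p' -> exists w, is_coupling p p' w.
Proof.
  intros [l [Hl [Sl El]]] [l' [Hl' [Sl' El']]].
  exists (flat_map (fun e => map (fun e' => (snd e, snd e', fst e * fst e')) l') l).
  split; [|split].
  - rewrite Forall_forall in Hl, Hl' |- *. intros x Hx.
    apply in_flat_map in Hx. destruct Hx as [e [He Hx]].
    apply in_map_iff in Hx. destruct Hx as [e' [<- He']]. simpl.
    apply Rmult_le_pos; [apply Hl| apply Hl']; auto.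
  - intros u. unfold marg1. rewrite sumR_flat_map, El. simpl.
    transitivity (sumR (map (fun x => sumR (map (fun y => (fst x * indic (u = snd x)) * fst y) l')) l)).
    + apply sumR_ext; intros; apply sumR_ext; intros. rewrite indic_sym. ring.
    + rewrite sumR_prod, Sl'. unfold lm. ring.
  - intros u. unfold marg2. rewrite sumR_flat_map, El'. simpl.
    transitivity (sumR (map (fun x => sumR (map (fun y => fst x * (fst y * indic (u = snd y))) l')) l)).
    + apply sumR_ext; intros; apply sumR_ext; intros. rewrite indic_sym. ring.
    + rewrite sumR_prod, Sl. unfold lm. ring.
Qed.

Lemma Kant_range {A} (dd : term A -> term A -> R) p p' :
  unit_valued dd -> fdist p -> fdist p' -> 0 <= Kant dd p p' <= 1.
Proof.
  intros Hu Hp Hp'. apply Rinf1_range. intros c [w [Hw ->]].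
  apply (cost_range dd p p'); auto.
Qed.

Lemma Kant_mono {A} (dd1 dd2 : term A -> term A -> R) p p' :
  unit_valued dd1 ->
  (forall t t', closed_term t -> closed_term t' -> dd1 t t' <= dd2 t t') ->
  fdist p -> fdist p' -> Kant dd1 p p' <= Kant dd2 p p'.
Proof.
  intros Hu Hle Hp Hp'. apply Rinf1_le.
  - intros y [w [Hw ->]]. exists (cost dd1 w). split; [eauto|].
    apply (cost_le dd1 dd2 p p'); auto.
  - intros c [w [Hw ->]]. apply (cost_range dd1 p p'); auto.
Qed.

Lemma Kant_le_cost {A} (dd : term A -> term A -> R) p p' w :
  unit_valued dd -> fdist p -> fdist p' -> is_coupling p p' w -> Kant dd p p' <= cost dd w.
Proof.
  intros Hu Hp Hp' Hw. apply (Rinf1_le_elem _ 0); eauto.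
  intros c [w' [Hw' ->]]. apply (cost_range dd p p'); auto.
Qed.

Lemma Haus_range {A} (dd : term A -> term A -> R) (P1 P2 : dist A -> Prop) :
  unit_valued dd -> (forall p, P1 p -> fdist p) -> (forall p, P2 p -> fdist p) ->
  0 <= Haus (Kant dd) P1 P2 <= 1.
Proof.
  intros Hu H1 H2. unfold Haus.
  assert (0 <= Rsup0 (fun r => exists p1, P1 p1 /\
                  r = Rinf1 (fun s => exists p2, P2 p2 /\ s = Kant dd p1 p2)) <= 1).
  { apply Rsup0_range. intros r [p1 [Hp1 ->]]. apply Rinf1_range.
    intros s [p2 [Hp2 ->]]. apply Kant_range; auto. }
  assert (0 <= Rsup0 (fun r => exists p2, P2 p2 /\
                  r = Rinf1 (fun s => exists p1, P1 p1 /\ s = Kant dd p2 p1)) <= 1).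
  { apply Rsup0_range. intros r [p1 [Hp1 ->]]. apply Rinf1_range.
    intros s [p2 [Hp2 ->]]. apply Kant_range; auto. }
  unfold Rmax. destruct (Rle_dec _ _); lra.
Qed.

Lemma Haus_mono {A} (dd1 dd2 : term A -> term A -> R) (P1 P2 : dist A -> Prop) :
  unit_valued dd1 -> unit_valued dd2 ->
  (forall t t', closed_term t -> closed_term t' -> dd1 t t' <= dd2 t t') ->
  (forall p, P1 p -> fdist p) -> (forall p, P2 p -> fdist p) ->
  Haus (Kant dd1) P1 P2 <= Haus (Kant dd2) P1 P2.
Proof.
  intros Hu1 Hu2 Hle H1 H2. unfold Haus. apply Rmax_lub.
  - eapply Rle_trans; [|apply Rmax_l]. apply Rsup0_le.
    + intros r [p1 [Hp1 ->]]. eexists; split; [exists p1; split; [auto|reflexivity]|].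
      apply Rinf1_le.
      * intros y [p2 [Hp2 ->]]. exists (Kant dd1 p1 p2). split; [eauto|].
        apply Kant_mono; auto.
      * intros x [p2 [Hp2 ->]]. apply Kant_range; auto.
    + intros r [p1 [Hp1 ->]]. apply Rinf1_range. intros s [p2 [Hp2 ->]].
      apply Kant_range; auto.
  - eapply Rle_trans; [|apply Rmax_r]. apply Rsup0_le.
    + intros r [p1 [Hp1 ->]]. eexists; split; [exists p1; split; [auto|reflexivity]|].
      apply Rinf1_le.
      * intros y [p2 [Hp2 ->]]. exists (Kant dd1 p1 p2). split; [eauto|].
        apply Kant_mono; auto.
      * intros x [p2 [Hp2 ->]]. apply Kant_range; auto.
    + intros r [p1 [Hp1 ->]]. apply Rinf1_range. intros s [p2 [Hp2 ->]].
      apply Kant_range; auto.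
Qed.

Lemma der_fdist {A} (t : term A) a : closed_term t -> forall p, der t a p -> fdist p.
Proof. intros Hc p Hp. apply (fdist_step t a); auto. Qed.

Lemma Bfun_range {A} (dd : term A -> term A -> R) t t' :
  unit_valued dd -> closed_term t -> closed_term t' -> 0 <= Bfun dd t t' <= 1.
Proof.
  intros Hu Hc Hc'. apply Rsup0_range. intros r [a ->].
  apply Haus_range; auto; apply der_fdist; auto.
Qed.

Lemma Bfun_mono {A} (dd1 dd2 : term A -> term A -> R) t t' :
  unit_valued dd1 -> unit_valued dd2 ->
  (forall t t', closed_term t -> closed_term t' -> dd1 t t' <= dd2 t t') ->
  closed_term t -> closed_term t' -> Bfun dd1 t t' <= Bfun dd2 t t'.
Proof.
  intros Hu1 Hu2 Hle Hc Hc'. apply Rsup0_le.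
  - intros r [a ->]. eexists; split; [exists a; reflexivity|].
    apply Haus_mono; auto; apply der_fdist; auto.
  - intros r [a ->]. apply Haus_range; auto; apply der_fdist; auto.
Qed.

Lemma Bfun_unit {A} (dd : term A -> term A -> R) : unit_valued dd -> unit_valued (Bfun dd).
Proof. intros Hu t t' Hc Hc'. apply Bfun_range; auto. Qed.

Definition prefixB {A} (dd : term A -> term A -> R) : Prop :=
  forall t t', closed_term t -> closed_term t' -> Bfun dd t t' <= dd t t'.

Lemma lfp_le_prefix {A} (d d' : term A -> term A -> R) :
  is_bisim_metric d -> unit_valued d' -> prefixB d' ->
  forall t t', closed_term t -> closed_term t' -> d t t' <= d' t t'.
Proof.
  intros [Hu [Hfix Hleast]] Hu' Hp'.
  set (ds := fun t t' : term A => Rinf1 (fun v => exists dd : term A -> term A -> R, unit_valued dd /\ prefixB dd /\ v = dd t t')).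
  assert (Hdsu : unit_valued ds).
  { intros t t' Hc Hc'. apply Rinf1_range. intros v [dd [Hu1 [_ ->]]]. auto. }
  assert (Hdsle : forall dd, unit_valued dd -> prefixB dd ->
            forall t t', closed_term t -> closed_term t' -> ds t t' <= dd t t').
  { intros dd Hu1 Hp1 t t' Hc Hc'. apply (Rinf1_le_elem _ 0); [|eauto].
    intros v [dd' [Hu2 [_ ->]]]. apply Hu2; auto. }
  assert (Hdsp : prefixB ds).
  { intros t t' Hc Hc'. apply Rinf1_ge.
    - intros v [dd [Hu1 [Hp1 ->]]].
      eapply Rle_trans; [|apply Hp1; auto]. apply Bfun_mono; auto.
    - apply Bfun_range; auto. }
  assert (HB : prefixB (Bfun ds)).
  { intros t t' Hc Hc'. apply Bfun_mono; auto using Bfun_unit. }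
  assert (Hfx : fixpoint_B ds).
  { intros t t' Hc Hc'. apply Rle_antisym; auto.
    apply Hdsle; auto using Bfun_unit. }
  intros t t' Hc Hc'. apply Rle_trans with (ds t t'); [apply Hleast; auto|]. apply Hdsle; auto.
Qed.

Definition swapw {A} (w : coupling A) : coupling A :=
  map (fun e => (snd (fst e), fst (fst e), snd e)) w.

Lemma swapw_inv {A} (w : coupling A) : swapw (swapw w) = w.
Proof.
  unfold swapw. rewrite map_map. simpl. rewrite <- (map_id w) at 2.
  apply map_ext. intros [[x y] r]; reflexivity.
Qed.

Lemma swapw_coupling {A} (p p' : dist A) w :
  is_coupling p p' w -> is_coupling p' p (swapw w).
Proof.
  intros [Hw [H1 H2]]. split; [|split].
  - unfold swapw. rewrite Forall_map. simpl. auto.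
  - intros u. rewrite <- H2. unfold marg1, marg2, swapw. rewrite map_map. reflexivity.
  - intros u. rewrite <- H1. unfold marg1, marg2, swapw. rewrite map_map. reflexivity.
Qed.

Lemma Kant_swap {A} (dd : term A -> term A -> R) p p' :
  Kant (fun x y => dd y x) p p' = Kant dd p' p.
Proof.
  unfold Kant. f_equal. apply functional_extensionality. intros c.
  apply propositional_extensionality. split.
  - intros [w [Hw ->]]. exists (swapw w). split; [apply swapw_coupling; auto|].
    unfold cost, swapw. rewrite map_map. reflexivity.
  - intros [w [Hw ->]]. exists (swapw w). split; [apply swapw_coupling; auto|].
    unfold cost, swapw. rewrite map_map. reflexivity.
Qed.

Lemma Haus_sym {A} (h : dist A -> dist A -> R) P1 P2 : Haus h P1 P2 = Haus h P2 P1.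
Proof. unfold Haus. apply Rmax_comm. Qed.

Lemma Bfun_sym {A} (dd : term A -> term A -> R) t t' : Bfun dd t t' = Bfun dd t' t.
Proof.
  unfold Bfun. f_equal. apply functional_extensionality. intros r.
  apply propositional_extensionality. split; intros [a ->]; exists a; apply Haus_sym.
Qed.

Lemma d_sym {A} (d : term A -> term A -> R) :
  is_bisim_metric d -> forall t t', closed_term t -> closed_term t' -> d t t' = d t' t.
Proof.
  intros [Hu [Hfix _]] t t' Hc Hc'. rewrite <- (Hfix t t'), <- (Hfix t' t) by auto.
  apply Bfun_sym.
Qed.

Definition prodc {A} (B : A -> Prop) (w1 w2 : coupling A) : coupling A :=
  flat_map (fun e1 => map (fun e2 => (Par B (fst (fst e1)) (fst (fst e2)),
                                      Par B (snd (fst e1)) (snd (fst e2)),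
                                      snd e1 * snd e2)) w2) w1.

Lemma par_dist_ext {A} B (f f' g g' : dist A) u :
  (forall v, f v = f' v) -> (forall v, g v = g' v) -> par_dist B f g u = par_dist B f' g' u.
Proof. intros Hf Hg. destruct u; simpl; auto. rewrite Hf, Hg; auto. Qed.

Lemma prodc_coupling {A} (B : A -> Prop) p1 r1 p2 r2 w1 w2 :
  is_coupling p1 r1 w1 -> is_coupling p2 r2 w2 ->
  is_coupling (par_dist B p1 p2) (par_dist B r1 r2) (prodc B w1 w2).
Proof.
  intros [Hw1 [H11 H12]] [Hw2 [H21 H22]]. split; [|split].
  - rewrite Forall_forall in Hw1, Hw2 |- *. intros x Hx. unfold prodc in Hx.
    apply in_flat_map in Hx. destruct Hx as [e [He Hx]].
    apply in_map_iff in Hx. destruct Hx as [e' [<- He']]. simpl.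
    apply Rmult_le_pos; auto.
  - intros u. unfold marg1, prodc. rewrite sumR_flat_map. simpl.
    transitivity (sumR (map (fun x => sumR (map (fun y => snd x * snd y *
       indic (u = Par B (fst (fst x)) (fst (fst y)))) w2)) w1)).
    + apply sumR_ext; intros; apply sumR_ext; intros. rewrite indic_sym. ring.
    + rewrite sum_par. apply par_dist_ext; intros v.
      * rewrite <- H11. unfold marg1. apply sumR_ext; intros. rewrite indic_sym; ring.
      * rewrite <- H21. unfold marg1. apply sumR_ext; intros. rewrite indic_sym; ring.
  - intros u. unfold marg2, prodc. rewrite sumR_flat_map. simpl.
    transitivity (sumR (map (fun x => sumR (map (fun y => snd x * snd y *
       indic (u = Par B (snd (fst x)) (snd (fst y)))) w2)) w1)).
    + apply sumR_ext; intros; apply sumR_ext; intros. rewrite indic_sym. ring.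
    + rewrite sum_par. apply par_dist_ext; intros v.
      * rewrite <- H12. unfold marg2. apply sumR_ext; intros. rewrite indic_sym; ring.
      * rewrite <- H22. unfold marg2. apply sumR_ext; intros. rewrite indic_sym; ring.
Qed.

Lemma prodc_cost {A} (B : A -> Prop) (dd d' : term A -> term A -> R) w1 w2 :
  (forall x1 x2 y1 y2, d' (Par B x1 x2) (Par B y1 y2) <=
        1 - (1 - dd x1 y1) * (1 - dd x2 y2)) ->
  Forall (fun e => 0 <= snd e) w1 -> Forall (fun e => 0 <= snd e) w2 ->
  sumR (map snd w1) <= 1 -> sumR (map snd w2) <= 1 ->
  0 <= cost dd w1 -> 0 <= cost dd w2 ->
  cost d' (prodc B w1 w2) <= cost dd w1 + cost dd w2 - cost dd w1 * cost dd w2.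
Proof.
  intros Hb Hw1 Hw2 W1 W2 C1 C2. unfold cost at 1, prodc. rewrite sumR_flat_map. simpl.
  rewrite Forall_forall in Hw1, Hw2.
  eapply Rle_trans.
  - apply sumR_le. intros x Hx. apply sumR_le. intros y Hy.
    apply (Rmult_le_compat_l (snd x * snd y)); [apply Rmult_le_pos; auto| apply Hb].
  - transitivity (sumR (map (fun x => sumR (map (fun y =>
        (snd x * dd (fst (fst x)) (snd (fst x))) * snd y + snd x * (snd y * dd (fst (fst y)) (snd (fst y)))
        - (snd x * dd (fst (fst x)) (snd (fst x))) * (snd y * dd (fst (fst y)) (snd (fst y)))) w2)) w1)).
    + right. apply sumR_ext; intros; apply sumR_ext; intros. ring.
    + erewrite sumR_ext.
      2:{ intros x _. rewrite sumR_minus, sumR_plus, sumR_scal, sumR_scal, sumR_scal. reflexivity. }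
      rewrite sumR_minus, sumR_plus, sumR_scal_r, sumR_scal_r, sumR_scal_r.
      fold (cost dd w2). unfold cost in *.
      set (c1 := sumR (map (fun e => snd e * dd (fst (fst e)) (snd (fst e))) w1)) in *.
      set (c2 := sumR (map (fun e => snd e * dd (fst (fst e)) (snd (fst e))) w2)) in *.
      assert (0 <= c1 * (1 - sumR (map snd w2))) by (apply Rmult_le_pos; lra).
      assert (0 <= c2 * (1 - sumR (map snd w1))) by (apply Rmult_le_pos; lra). lra.
Qed.

Lemma first_le_d {A} (d : term A -> term A -> R) x y a p :
  is_bisim_metric d -> closed_term x -> closed_term y -> step x a p ->
  Rinf1 (fun s => exists p', der y a p' /\ s = Kant d p p') <= d x y.
Proof.
  intros Hd Hx Hy Hp. pose proof Hd as [Hu [Hfix _]].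
  rewrite <- (Hfix x y Hx Hy).
  eapply Rle_trans; [|apply (Rsup0_ge_elem _ 1); [|exists a; reflexivity]].
  - unfold Haus. eapply Rle_trans; [|apply Rmax_l].
    apply (Rsup0_ge_elem _ 1).
    + intros r [p1 [Hp1 ->]]. apply Rinf1_range. intros s [p2 [Hp2 ->]].
      apply Kant_range; auto; [eapply der_fdist; [exact Hx| exact Hp1] | eapply der_fdist; [exact Hy| exact Hp2]].
    + exists p; split; auto.
  - intros r [b ->]. apply Haus_range; auto; apply der_fdist; auto.
Qed.

Definition gb {A} (d : term A -> term A -> R) (u u' : term A) : R :=
  match u, u' with
  | Par B1 u1 u2, Par B2 v1 v2 =>
      if excluded_middle_informative (B1 = (fun _ => True) /\ B2 = (fun _ => True))
      then 1 - (1 - d u1 v1) * (1 - d u2 v2) else 1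
  | _, _ => 1
  end.

Definition dpar {A} (d : term A -> term A -> R) (u u' : term A) : R :=
  Rmin (d u u') (gb d u u').

Lemma gb_range {A} (d : term A -> term A -> R) u u' :
  unit_valued d -> closed_term u -> closed_term u' -> 0 <= gb d u u' <= 1.
Proof.
  intros Hu Hc Hc'. destruct u as [| | | |B1 u1 u2]; destruct u' as [| | | |B2 v1 v2];
  simpl; try lra.
  destruct (excluded_middle_informative _); [|lra].
  apply closed_par in Hc; apply closed_par in Hc'.
  pose proof (Hu u1 v1 (proj1 Hc) (proj1 Hc')). pose proof (Hu u2 v2 (proj2 Hc) (proj2 Hc')).
  split; nra.
Qed.

Lemma dpar_unit {A} (d : term A -> term A -> R) : unit_valued d -> unit_valued (dpar d).
Proof.
  intros Hu u u' Hc Hc'. unfold dpar. pose proof (gb_range d u u' Hu Hc Hc').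
  pose proof (Hu u u' Hc Hc'). unfold Rmin; destruct (Rle_dec _ _); lra.
Qed.

Lemma dpar_gb {A} (d : term A -> term A -> R) x1 x2 y1 y2 :
  dpar d (Par (fun _ : A => True) x1 x2) (Par (fun _ => True) y1 y2) <=
  1 - (1 - d x1 y1) * (1 - d x2 y2).
Proof.
  unfold dpar. eapply Rle_trans; [apply Rmin_r|]. simpl.
  destruct (excluded_middle_informative _) as [_|h]; [lra|]. exfalso; tauto.
Qed.

Lemma core_first {A} (d : term A -> term A -> R) x1 x2 y1 y2 a p :
  is_bisim_metric d -> closed_term x1 -> closed_term x2 -> closed_term y1 -> closed_term y2 ->
  step (Par (fun _ : A => True) x1 x2) a p ->
  Rinf1 (fun s => exists p', der (Par (fun _ : A => True) y1 y2) a p' /\ s = Kant (dpar d) p p')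
  <= 1 - (1 - d x1 y1) * (1 - d x2 y2).
Proof.
  intros Hd Hx1 Hx2 Hy1 Hy2 Hst. pose proof Hd as [Hu _].
  assert (HX : closed_term (Par (fun _ : A => True) x1 x2)) by (apply closed_par'; auto).
  assert (HY : closed_term (Par (fun _ : A => True) y1 y2)) by (apply closed_par'; auto).
  assert (Hpf : fdist p) by (eapply fdist_step; eauto).
  pose proof (dpar_unit d Hu) as Hu'.
  assert (Hle1 : Rinf1 (fun s => exists p', der (Par (fun _ : A => True) y1 y2) a p' /\
                  s = Kant (dpar d) p p') <= 1).
  { apply Rinf1_le1. intros s [p' [Hp' ->]]. apply Kant_range; auto. eapply der_fdist; eauto. }
  inversion Hst; subst; try (exfalso; auto; fail).
  rename H5 into Hs1, H6 into Hs2.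
  pose proof (Hu x1 y1 Hx1 Hy1). pose proof (Hu x2 y2 Hx2 Hy2).
  pose proof (first_le_d d x1 y1 a p1 Hd Hx1 Hy1 Hs1) as K1.
  pose proof (first_le_d d x2 y2 a p2 Hd Hx2 Hy2 Hs2) as K2.
  destruct (classic (exists p1', der y1 a p1')) as [[q1 Hq1]|Hn1].
  2:{ rewrite Rinf1_empty in K1; [nra|]. intros [s [p1' [Hp1' _]]]. apply Hn1; eauto. }
  destruct (classic (exists p2', der y2 a p2')) as [[q2 Hq2]|Hn2].
  2:{ rewrite Rinf1_empty in K2; [nra|]. intros [s [p2' [Hp2' _]]]. apply Hn2; eauto. }
  assert (Hf1 : fdist p1) by (eapply fdist_step; eauto).
  assert (Hf2 : fdist p2) by (eapply fdist_step; eauto).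
  apply le_epsilon'. intros eps Heps. set (dl := eps / 4).
  assert (Hdl : 0 < dl) by (unfold dl; lra).
  assert (NE1 : exists x, (fun s => exists p', der y1 a p' /\ s = Kant d p1 p') x)
    by (exists (Kant d p1 q1); eauto).
  assert (LB1 : forall x, (fun s => exists p', der y1 a p' /\ s = Kant d p1 p') x -> 0 <= x).
  { intros s [p' [Hp' ->]]. apply Kant_range; auto. eapply der_fdist; [exact Hy1| exact Hp']. }
  destruct (Rinf1_approx _ 0 NE1 LB1 dl Hdl) as [k1 [[r1 [Hr1 ->]] Hk1]].
  assert (NE2 : exists x, (fun s => exists p', der y2 a p' /\ s = Kant d p2 p') x)
    by (exists (Kant d p2 q2); eauto).
  assert (LB2 : forall x, (fun s => exists p', der y2 a p' /\ s = Kant d p2 p') x -> 0 <= x).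
  { intros s [p' [Hp' ->]]. apply Kant_range; auto. eapply der_fdist; [exact Hy2| exact Hp']. }
  destruct (Rinf1_approx _ 0 NE2 LB2 dl Hdl) as [k2 [[r2 [Hr2 ->]] Hk2]].
  assert (Hg1 : fdist r1) by (eapply der_fdist; [exact Hy1| exact Hr1]).
  assert (Hg2 : fdist r2) by (eapply der_fdist; [exact Hy2| exact Hr2]).
  destruct (coupling_exists p1 r1 Hf1 Hg1) as [w10 Hw10].
  destruct (coupling_exists p2 r2 Hf2 Hg2) as [w20 Hw20].
  assert (NE3 : exists x, (fun c => exists w, is_coupling p1 r1 w /\ c = cost d w) x) by eauto.
  assert (LB3 : forall x, (fun c => exists w, is_coupling p1 r1 w /\ c = cost d w) x -> 0 <= x).
  { intros c [w [Hw ->]]. apply (cost_range d p1 r1); auto. }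
  destruct (Rinf1_approx _ 0 NE3 LB3 dl Hdl) as [c1 [[w1 [Hw1 ->]] Hc1]].
  assert (NE4 : exists x, (fun c => exists w, is_coupling p2 r2 w /\ c = cost d w) x) by eauto.
  assert (LB4 : forall x, (fun c => exists w, is_coupling p2 r2 w /\ c = cost d w) x -> 0 <= x).
  { intros c [w [Hw ->]]. apply (cost_range d p2 r2); auto. }
  destruct (Rinf1_approx _ 0 NE4 LB4 dl Hdl) as [c2 [[w2 [Hw2 ->]] Hc2]].
  fold (Kant d p1 r1) in Hc1. fold (Kant d p2 r2) in Hc2.
  pose proof (cost_range d p1 r1 w1 Hu Hf1 Hg1 Hw1) as R1.
  pose proof (cost_range d p2 r2 w2 Hu Hf2 Hg2 Hw2) as R2.
  assert (Hpc := prodc_coupling (fun _ => True) p1 r1 p2 r2 w1 w2 Hw1 Hw2).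
  assert (Hpf' : fdist (par_dist (fun _ : A => True) r1 r2)) by (apply fdist_par; auto).
  eapply Rle_trans.
  { apply (Rinf1_le_elem _ 0).
    - intros s [p' [Hp' ->]]. apply Kant_range; auto. eapply der_fdist; eauto.
    - exists (par_dist (fun _ => True) r1 r2). split; [|reflexivity].
      apply st_sync; auto. }
  eapply Rle_trans; [apply (Kant_le_cost _ _ _ _ Hu' Hpf Hpf' Hpc)|].
  eapply Rle_trans.
  { apply prodc_cost.
    - intros. apply dpar_gb.
    - apply Hw1. - apply Hw2.
    - apply (weight_le1 p1 r1); auto. - apply (weight_le1 p2 r2); auto.
    - lra. - lra. }
  set (C1 := cost d w1) in *. set (C2 := cost d w2) in *.
  assert (C1 <= d x1 y1 + 2 * dl) by lra.
  assert (C2 <= d x2 y2 + 2 * dl) by lra.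
  assert ((C1 - d x1 y1) * (1 - C2) <= 2 * dl * (1 - C2)) by (apply Rmult_le_compat_r; lra).
  assert ((1 - d x1 y1) * (C2 - d x2 y2) <= (1 - d x1 y1) * (2 * dl))
    by (apply Rmult_le_compat_l; lra).
  assert (2 * dl * (1 - C2) <= 2 * dl) by nra.
  assert ((1 - d x1 y1) * (2 * dl) <= 2 * dl) by nra.
  unfold dl in *. nra.
Qed.

Lemma par_bound {A} (d : term A -> term A -> R) x1 x2 y1 y2 :
  is_bisim_metric d -> closed_term x1 -> closed_term x2 -> closed_term y1 -> closed_term y2 ->
  d (Par (fun _ : A => True) x1 x2) (Par (fun _ => True) y1 y2) <=
  1 - (1 - d x1 y1) * (1 - d x2 y2).
Proof.
  intros Hd Hx1 Hx2 Hy1 Hy2. pose proof Hd as [Hu [Hfix _]].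
  eapply Rle_trans; [apply (lfp_le_prefix d (dpar d)); auto|].
  - apply dpar_unit; auto.
  - intros X Y HX HY. unfold dpar at 2. apply Rmin_glb.
    + rewrite <- (Hfix X Y HX HY). apply Bfun_mono; auto using dpar_unit.
      intros; unfold dpar; apply Rmin_l.
    + destruct X as [| | | |B1 u1 u2]; destruct Y as [| | | |B2 v1 v2];
        try (apply Bfun_range; auto using dpar_unit; fail).
      simpl. destruct (excluded_middle_informative _) as [[-> ->]|h];
        [| apply Bfun_range; auto using dpar_unit].
      apply closed_par in HX; apply closed_par in HY.
      destruct HX as [Hu1 Hu2]; destruct HY as [Hv1 Hv2].
      pose proof (Hu u1 v1 Hu1 Hv1). pose proof (Hu u2 v2 Hu2 Hv2).
      apply Rsup0_ub; [|nra]. intros r [a ->]. unfold Haus. apply Rmax_lub.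
      * apply Rsup0_ub; [|nra]. intros r [p [Hp ->]]. apply core_first; auto.
      * apply Rsup0_ub; [|nra]. intros r [p [Hp ->]].
        rewrite (d_sym d Hd u1 v1), (d_sym d Hd u2 v2) by auto.
        apply core_first; auto.
    - apply closed_par'; auto.
    - apply closed_par'; auto.
  - unfold dpar. eapply Rle_trans; [apply Rmin_r|]. simpl.
    destruct (excluded_middle_informative _) as [_|h]; [lra|]. exfalso; tauto.
Qed.

Fixpoint term_ind' {A} (P : term A -> Prop) (Hn : P Nil) (Hv : forall x, P (Var x))
  (Hp : forall a q ts, Forall P ts -> P (Pref a q ts))
  (Hpl : forall t1 t2, P t1 -> P t2 -> P (Plus t1 t2))
  (Hpa : forall B t1 t2, P t1 -> P t2 -> P (Par B t1 t2)) (t : term A) : P t :=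
  match t with
  | Nil => Hn
  | Var x => Hv x
  | Pref a q ts => Hp a q ts
      ((fix go (l : list (term A)) : Forall P l :=
          match l with
          | [] => Forall_nil _
          | u :: l' => Forall_cons _ (term_ind' P Hn Hv Hp Hpl Hpa u) (go l')
          end) ts)
  | Plus t1 t2 => Hpl t1 t2 (term_ind' P Hn Hv Hp Hpl Hpa t1) (term_ind' P Hn Hv Hp Hpl Hpa t2)
  | Par B t1 t2 => Hpa B t1 t2 (term_ind' P Hn Hv Hp Hpl Hpa t1) (term_ind' P Hn Hv Hp Hpl Hpa t2)
  end.

Lemma subst_pref {A} (s : nat -> term A) a q ts :
  subst s (Pref a q ts) = Pref a q (map (subst s) ts).
Proof.
  reflexivity.
Qed.

Fixpoint prefsem {A} (q : list R) (l : list (term A)) : pdist :=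
  match q, l with
  | qi :: q', u :: l' => map (fun e => (qi * fst e, snd e)) (sem u) ++ prefsem q' l'
  | _, _ => []
  end.

Lemma sem_pref {A} (a : A) q ts : sem (Pref a q ts) = prefsem q ts.
Proof.
  revert q; induction ts; intros [|r q]; simpl; auto. f_equal. apply IHts.
Qed.

Fixpoint wsum {A} (q : list R) (l : list (term A)) (f : term A -> R) : R :=
  match q, l with
  | qi :: q', u :: l' => qi * f u + wsum q' l' f
  | _, _ => 0
  end.

Lemma closed_subst {A} (s : nat -> term A) t :
  (forall x, closed_term (s x)) -> prob_term t -> closed_term (subst s t).
Proof.
  intros Hs. induction t as [| x | a q ts IH | t1 t2 IH1 IH2 | B t1 t2 IH1 IH2]
    using term_ind'; intros Ht.
  - split; constructor.
  - apply Hs.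
  - inversion Ht; subst. rewrite subst_pref.
    assert (HF : Forall closed_term (map (subst s) ts)).
    { apply Forall_map. rewrite Forall_forall in IH, H4 |- *. intros; apply IH; auto. }
    split; constructor; auto.
    + rewrite length_map; auto.
    + eapply Forall_impl; [|exact HF]. intros u [h _]; exact h.
    + eapply Forall_impl; [|exact HF]. intros u [_ h]; exact h.
  - inversion Ht.
  - inversion Ht; subst. apply closed_par'; auto.
Qed.

Definition Iinf (m : mult) (e : nat -> R) : R :=
  Rinf1 (fun p => exists n, p = partial_prod m e n).

Definition erange (e : nat -> R) : Prop := forall x, 0 <= e x < 1.

Lemma pow_range c k : 0 <= c <= 1 -> 0 <= c ^ k <= 1.
Proof.
  intros H. induction k; simpl; [lra|]. split; nra.
Qed.

Lemma factor_range m e x : erange e -> 0 <= factor m e x <= 1.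
Proof.
  intros He. unfold factor. destruct (m x).
  - apply pow_range. specialize (He x). lra.
  - destruct (excluded_middle_informative _); lra.
Qed.

Lemma fold_mult_c (l : list R) c : fold_right Rmult c l = fold_right Rmult 1 l * c.
Proof. induction l; simpl; [ring|]. rewrite IHl. ring. Qed.

Lemma pp_S m e n : partial_prod m e (S n) = partial_prod m e n * factor m e n.
Proof.
  unfold partial_prod. rewrite seq_S, map_app, fold_right_app. simpl.
  rewrite fold_mult_c. ring.
Qed.

Lemma pp_0 m e : partial_prod m e 0 = 1.
Proof. reflexivity. Qed.

Lemma pp_range m e n : erange e -> 0 <= partial_prod m e n <= 1.
Proof.
  intros He. induction n; [rewrite pp_0; lra|]. rewrite pp_S.
  pose proof (factor_range m e n He). split; nra.
Qed.

Lemma pp_decr m e k n : erange e -> (k <= n)%nat -> partial_prod m e n <= partial_prod m e k.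
Proof.
  intros He H. induction H; [lra|]. rewrite pp_S.
  pose proof (factor_range m e m0 He). pose proof (pp_range m e m0 He). nra.
Qed.

Lemma factor_madd m1 m2 e x : factor (madd m1 m2) e x = factor m1 e x * factor m2 e x.
Proof.
  unfold factor, madd, oadd.
  destruct (m1 x); destruct (m2 x);
    try destruct (excluded_middle_informative (e x = 0)) as [h|h];
    try rewrite pow_add; try rewrite h; try rewrite Rminus_0_r; try rewrite pow1; ring.
Qed.

Lemma pp_madd m1 m2 e n :
  partial_prod (madd m1 m2) e n = partial_prod m1 e n * partial_prod m2 e n.
Proof.
  induction n; [rewrite !pp_0; ring|]. rewrite !pp_S, IHn, factor_madd. ring.
Qed.

Lemma Iinf_range m e : erange e -> 0 <= Iinf m e <= 1.
Proof. intros He. apply Rinf1_range. intros p [n ->]. apply pp_range; auto. Qed.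

Lemma Iinf_le_pp m e n : erange e -> Iinf m e <= partial_prod m e n.
Proof.
  intros He. apply (Rinf1_le_elem _ 0); [|eauto].
  intros p [k ->]. apply pp_range; auto.
Qed.

Lemma Iinf_madd m1 m2 e : erange e -> Iinf (madd m1 m2) e <= Iinf m1 e * Iinf m2 e.
Proof.
  intros He.
  assert (NE : forall m, exists x, (fun p => exists n, p = partial_prod m e n) x)
    by (intros m; exists (partial_prod m e 0); eauto).
  assert (LB : forall m x, (fun p => exists n, p = partial_prod m e n) x -> 0 <= x)
    by (intros m x [n ->]; apply pp_range; auto).
  pose proof (Iinf_range m1 e He). pose proof (Iinf_range m2 e He).
  apply le_epsilon'. intros eps Heps. set (dl := Rmin 1 (eps / 3)).
  assert (Hdl : 0 < dl /\ dl <= 1 /\ dl <= eps / 3).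
  { unfold dl, Rmin. destruct (Rle_dec _ _); lra. }
  destruct (Rinf1_approx _ 0 (NE m1) (LB m1) dl (proj1 Hdl)) as [x1 [[n1 ->] H1]].
  destruct (Rinf1_approx _ 0 (NE m2) (LB m2) dl (proj1 Hdl)) as [x2 [[n2 ->] H2]].
  fold (Iinf m1 e) in H1. fold (Iinf m2 e) in H2.
  pose proof (Iinf_le_pp (madd m1 m2) e (max n1 n2) He) as HH.
  rewrite pp_madd in HH.
  pose proof (pp_decr m1 e n1 (max n1 n2) He (Nat.le_max_l _ _)).
  pose proof (pp_decr m2 e n2 (max n1 n2) He (Nat.le_max_r _ _)).
  pose proof (pp_range m1 e (max n1 n2) He). pose proof (pp_range m2 e (max n1 n2) He).
  assert (partial_prod m1 e (max n1 n2) * partial_prod m2 e (max n1 n2) <=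
          (Iinf m1 e + dl) * (Iinf m2 e + dl)).
  { apply Rmult_le_compat; lra. }
  nra.
Qed.

Lemma Iinf_mone x e : erange e -> Iinf (mone x) e <= 1 - e x.
Proof.
  intros He. eapply Rle_trans; [apply (Iinf_le_pp _ _ (S x)); auto|].
  assert (Hk : forall k, (k <= x)%nat -> partial_prod (mone x) e k = 1).
  { induction k; intros Hk; [apply pp_0|]. rewrite pp_S, IHk by lia.
    unfold factor, mone. replace (Nat.eqb k x) with false; [simpl; ring|].
    symmetry. apply Nat.eqb_neq. lia. }
  rewrite pp_S, Hk by lia. unfold factor, mone. rewrite Nat.eqb_refl. simpl. lra.
Qed.

Fixpoint pcoupf {A} (q : list R) (ts : list (term A)) (f g : term A -> term A) : coupling A :=
  match q, ts with
  | qi :: q', t :: ts' => (f t, g t, qi) :: pcoupf q' ts' f g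
  | _, _ => []
  end.

Lemma pcoupf_coupling {A} q (ts : list (term A)) f g :
  Forall (fun r => 0 <= r) q ->
  is_coupling (pref_dist q (map f ts)) (pref_dist q (map g ts)) (pcoupf q ts f g).
Proof.
  intros Hq. split; [|split].
  - revert q Hq; induction ts; intros [|r q] Hq; simpl; constructor.
    + inversion Hq; auto.
    + apply IHts. inversion Hq; auto.
  - clear Hq. intros u. unfold marg1, pref_dist. revert q; induction ts; intros [|r q]; cbn [map combine pcoupf]; auto.
    rewrite !sumR_cons, IHts. simpl. rewrite indic_sym. reflexivity.
  - clear Hq. intros u. unfold marg2, pref_dist. revert q; induction ts; intros [|r q]; cbn [map combine pcoupf]; auto.
    rewrite !sumR_cons, IHts. simpl. rewrite indic_sym. reflexivity.
Qed.

Lemma pcoupf_cost {A} (dd : term A -> term A -> R) q ts f g :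
  cost dd (pcoupf q ts f g) = wsum q ts (fun u => dd (f u) (g u)).
Proof.
  unfold cost. revert q; induction ts; intros [|r q]; cbn [map pcoupf wsum]; auto.
  rewrite sumR_cons, IHts. reflexivity.
Qed.

Lemma wsum_ext {A} q (ts : list (term A)) f g :
  (forall u, In u ts -> f u = g u) -> wsum q ts f = wsum q ts g.
Proof.
  revert q; induction ts; intros [|r q] H; simpl; auto.
  rewrite H by (left; auto). rewrite IHts; auto. intros; apply H; right; auto.
Qed.

Lemma wsum_le {A} q (ts : list (term A)) f g :
  Forall (fun r => 0 <= r) q ->
  (forall u, In u ts -> f u <= g u) -> wsum q ts f <= wsum q ts g.
Proof.
  revert q; induction ts; intros [|r q] Hq H; simpl; try lra.
  inversion Hq; subst.
  assert (f a <= g a) by (apply H; left; auto).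
  assert (wsum q ts f <= wsum q ts g) by (apply IHts; auto; intros; apply H; right; auto).
  nra.
Qed.

Lemma prefix_bound {A} (d : term A -> term A -> R) a q (ts : list (term A)) f g :
  is_bisim_metric d -> Forall (fun r => 0 <= r) q ->
  closed_term (Pref a q (map f ts)) -> closed_term (Pref a q (map g ts)) ->
  d (Pref a q (map f ts)) (Pref a q (map g ts)) <= wsum q ts (fun u => d (f u) (g u)).
Proof.
  intros Hd Hq Hc1 Hc2. pose proof Hd as [Hu [Hfix _]].
  pose proof (closed_pref _ _ _ Hc1) as [_ [_ Hf]].
  pose proof (closed_pref _ _ _ Hc2) as [_ [_ Hg]].
  rewrite Forall_forall in Hf, Hg.
  assert (Hfd : fdist (pref_dist q (map f ts))) by (eapply fdist_step; [constructor| exact Hc1]).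
  assert (Hgd : fdist (pref_dist q (map g ts))) by (eapply fdist_step; [constructor| exact Hc2]).
  pose proof (pcoupf_coupling q ts f g Hq) as W1.
  pose proof (pcoupf_coupling q ts g f Hq) as W2.
  assert (E2 : cost d (pcoupf q ts g f) = wsum q ts (fun u => d (f u) (g u))).
  { rewrite pcoupf_cost. apply wsum_ext. intros u Hu'. apply d_sym; auto;
      [apply Hg| apply Hf]; apply in_map; auto. }
  assert (E1 : cost d (pcoupf q ts f g) = wsum q ts (fun u => d (f u) (g u)))
    by apply pcoupf_cost.
  assert (M0 : 0 <= wsum q ts (fun u => d (f u) (g u))).
  { rewrite <- E1. apply (cost_range d _ _ _ Hu Hfd Hgd W1). }
  rewrite <- (Hfix _ _ Hc1 Hc2). apply Rsup0_ub; auto. intros r [b ->].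
  unfold Haus. apply Rmax_lub.
  - apply Rsup0_ub; auto. intros r [p [Hp ->]]. inversion Hp; subst.
    eapply Rle_trans; [apply (Rinf1_le_elem _ 0)|].
    + intros s [p' [Hp' ->]]. apply Kant_range; auto. eapply der_fdist; [exact Hc2| exact Hp'].
    + exists (pref_dist q (map g ts)). split; [constructor| reflexivity].
    + rewrite <- E1. apply Kant_le_cost; auto.
  - apply Rsup0_ub; auto. intros r [p [Hp ->]]. inversion Hp; subst.
    eapply Rle_trans; [apply (Rinf1_le_elem _ 0)|].
    + intros s [p' [Hp' ->]]. apply Kant_range; auto. eapply der_fdist; [exact Hc1| exact Hp'].
    + exists (pref_dist q (map f ts)). split; [constructor| reflexivity].
    + rewrite <- E2. apply Kant_le_cost; auto.
Qed.

Lemma nil_zero {A} (d : term A -> term A -> R) : is_bisim_metric d -> d Nil Nil <= 0.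
Proof.
  intros [Hu [Hfix _]].
  assert (Hc : @closed_term A Nil) by (split; constructor).
  rewrite <- (Hfix _ _ Hc Hc). apply Rsup0_ub; [|lra]. intros r [b ->].
  unfold Haus. apply Rmax_lub; apply Rsup0_ub; try lra; intros r [p [Hp _]]; inversion Hp.
Qed.

Lemma prefsem_sum {A} (g : mult -> R) q (ts : list (term A)) :
  sumR (map (fun c => fst c * g (snd c)) (prefsem q ts)) =
  wsum q ts (fun u => sumR (map (fun c => fst c * g (snd c)) (sem u))).
Proof.
  revert q; induction ts; intros [|r q]; cbn [prefsem wsum map]; auto.
  rewrite map_app, sumR_app, IHts, map_map. f_equal. simpl.
  rewrite <- sumR_scal. apply sumR_ext. intros; ring.
Qed.

Lemma wsum_one {A} q (ts : list (term A)) : length q = length ts -> wsum q ts (fun _ => 1) = sumR q.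
Proof.
  revert q; induction ts; intros [|r q] H; cbn [wsum length] in *; try discriminate; auto.
  rewrite sumR_cons, IHts by lia. ring.
Qed.

Lemma sem_prob {A} (t : term A) :
  prob_term t -> Forall (fun c => 0 <= fst c) (sem t) /\ sumR (map fst (sem t)) = 1.
Proof.
  induction t as [| x | a q ts IH | t1 t2 IH1 IH2 | B t1 t2 IH1 IH2] using term_ind';
    intros Ht.
  - simpl. split; [repeat constructor; simpl; lra| unfold sumR; simpl; lra].
  - simpl. split; [repeat constructor; simpl; lra| unfold sumR; simpl; lra].
  - inversion Ht; subst. destruct H2 as [_ [Hq Hs]]. rewrite sem_pref.
    assert (HI : forall u, In u ts -> Forall (fun c => 0 <= fst c) (sem u) /\
                                     sumR (map fst (sem u)) = 1).
    { rewrite Forall_forall in IH, H4. intros; apply IH; auto. }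
    split.
    + clear Hs H3 Ht IH H4. revert q Hq; induction ts; intros [|r q] Hq; simpl; try constructor.
      apply Forall_app. inversion Hq; subst. split.
      * apply Forall_map. destruct (HI a0 (or_introl eq_refl)) as [HF _].
        eapply Forall_impl; [|exact HF]. simpl. intros c Hc. nra.
      * apply IHts; auto. intros; apply HI; right; auto.
    + transitivity (sumR (map (fun c => fst c * (fun _ => 1) (snd c)) (prefsem q ts))).
      { apply sumR_ext; intros; ring. }
      rewrite (prefsem_sum (fun _ => 1)). transitivity (wsum q ts (fun _ => 1)).
      * apply wsum_ext. intros u Hu. transitivity (sumR (map fst (sem u))); [apply sumR_ext; intros; ring| apply HI; auto].
      * rewrite wsum_one; auto.
  - inversion Ht.
  - inversion Ht; subst. destruct (IH1 H1) as [F1 S1]. destruct (IH2 H3) as [F2 S2].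
    simpl. split.
    + rewrite Forall_forall in F1, F2 |- *. intros c Hc.
      apply in_flat_map in Hc. destruct Hc as [c1 [Hc1 Hc]].
      apply in_map_iff in Hc. destruct Hc as [c2 [<- Hc2]]. simpl.
      apply Rmult_le_pos; auto.
    + rewrite sumR_flat_map. simpl. rewrite sumR_prod, S1, S2. ring.
Qed.

Definition Qm (p : pdist) (e : nat -> R) : R := sumR (map (fun c => fst c * Iinf (snd c) e) p).

Lemma pda_Q p e : pda p e = sumR (map fst p) - Qm p e.
Proof.
  unfold pda, Qm. rewrite <- sumR_minus. apply sumR_ext. intros c _.
  unfold dda, Iinf. ring.
Qed.

Lemma Qm_range (p : pdist) e :
  erange e -> Forall (fun c => 0 <= fst c) p -> sumR (map fst p) = 1 -> 0 <= Qm p e <= 1.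
Proof.
  intros He HF HS. rewrite Forall_forall in HF. split.
  - apply sumR_nonneg. intros c Hc. pose proof (Iinf_range (snd c) e He).
    pose proof (HF c Hc). nra.
  - rewrite <- HS. apply sumR_le. intros c Hc. pose proof (Iinf_range (snd c) e He).
    pose proof (HF c Hc). nra.
Qed.

Lemma Qm_par {A} (B : A -> Prop) t1 t2 e :
  erange e -> Forall (fun c => 0 <= fst c) (sem t1) -> Forall (fun c => 0 <= fst c) (sem t2) ->
  Qm (sem (Par B t1 t2)) e <= Qm (sem t1) e * Qm (sem t2) e.
Proof.
  intros He F1 F2. unfold Qm. simpl. rewrite sumR_flat_map, <- sumR_prod.
  rewrite Forall_forall in F1, F2.
  apply sumR_le; intros c1 Hc1; apply sumR_le; intros c2 Hc2. simpl.
  pose proof (Iinf_madd (snd c1) (snd c2) e He).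
  pose proof (F1 c1 Hc1). pose proof (F2 c2 Hc2).
  assert (0 <= fst c1 * fst c2) by (apply Rmult_le_pos; auto).
  apply Rle_trans with (fst c1 * fst c2 * (Iinf (snd c1) e * Iinf (snd c2) e)).
  - apply Rmult_le_compat_l; auto.
  - right; ring.
Qed.

Lemma main_claim {A} (d : term A -> term A -> R) (s1 s2 : nat -> term A) (t : term A) :
  is_bisim_metric d ->
  (forall x, closed_term (s1 x)) -> (forall x, closed_term (s2 x)) ->
  erange (fun x => d (s1 x) (s2 x)) ->
  prob_term t -> d (subst s1 t) (subst s2 t) <= pda (sem t) (fun x => d (s1 x) (s2 x)).
Proof.
  intros Hd Hs1 Hs2 He. pose proof Hd as [Hu _].
  set (e := fun x => d (s1 x) (s2 x)) in *.
  induction t as [| x | a q ts IH | t1 t2 IH1 IH2 | B t1 t2 IH1 IH2] using term_ind';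
    intros Ht.
  - simpl. pose proof (nil_zero d Hd). unfold pda, sumR; simpl.
    pose proof (Iinf_range mzero e He). unfold dda. fold (Iinf mzero e). nra.
  - simpl. unfold pda, sumR; simpl. pose proof (Iinf_mone x e He). unfold dda.
    fold (Iinf (mone x) e). unfold e in *. nra.
  - pose proof (closed_subst s1 _ Hs1 Ht) as C1.
    pose proof (closed_subst s2 _ Hs2 Ht) as C2.
    inversion Ht; subst. destruct H2 as [_ [Hq _]].
    assert (Hq' : Forall (fun r => 0 <= r) q).
    { eapply Forall_impl; [|exact Hq]. simpl; intros; lra. }
    rewrite !subst_pref in *. eapply Rle_trans; [apply prefix_bound; auto|].
    unfold pda. rewrite sem_pref, (prefsem_sum (fun m => dda m e)). apply wsum_le; auto.
    intros u Hu'. rewrite Forall_forall in IH, H4. apply IH; auto.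
  - inversion Ht.
  - inversion Ht; subst.
    rename H1 into H2. destruct (sem_prob t1 H2) as [F1 S1]. destruct (sem_prob t2 H3) as [F2 S2].
    destruct (sem_prob _ Ht) as [F S].
    pose proof (closed_subst s1 _ Hs1 H2). pose proof (closed_subst s1 _ Hs1 H3).
    pose proof (closed_subst s2 _ Hs2 H2). pose proof (closed_subst s2 _ Hs2 H3).
    specialize (IH1 H2). specialize (IH2 H3).
    rewrite pda_Q, S1 in IH1. rewrite pda_Q, S2 in IH2. rewrite pda_Q, S.
    pose proof (Qm_range _ e He F1 S1). pose proof (Qm_range _ e He F2 S2).
    pose proof (Qm_par (fun _ => True) t1 t2 e He F1 F2).
    pose proof (Hu (subst s1 t1) (subst s2 t1) ltac:(auto) ltac:(auto)).
    pose proof (Hu (subst s1 t2) (subst s2 t2) ltac:(auto) ltac:(auto)).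
    simpl. eapply Rle_trans; [apply par_bound; auto|].
    set (D1 := d (subst s1 t1) (subst s2 t1)) in *.
    set (D2 := d (subst s1 t2) (subst s2 t2)) in *.
    set (Q1 := Qm (sem t1) e) in *. set (Q2 := Qm (sem t2) e) in *.
    assert (Q1 * Q2 <= (1 - D1) * (1 - D2)) by (apply Rmult_le_compat; lra).
    simpl in H7. lra.
Qed.


Theorem proposition3 (A : Type)
  (HA : exists f : A -> nat, forall a b, f a = f b -> a = b)
  (d : term A -> term A -> R) (Hd : is_bisim_metric d)
  (t : term A) (Ht : prob_term t)
  (s1 s2 : nat -> term A)
  (Hs1 : forall x, closed_term (s1 x)) (Hs2 : forall x, closed_term (s2 x))
  (Hlt : forall x, d (s1 x) (s2 x) < 1) :
  d (subst s1 t) (subst s2 t) <= pda (sem t) (fun x => d (s1 x) (s2 x)).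
Proof.
  apply main_claim; auto.
  intros x. split; [apply (proj1 Hd); auto| apply Hlt].
Qed.
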